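(* Let $\Bbbk$ be a field with $\mathrm{char}(\Bbbk)\neq2$, and let $\xi,\gamma\in\Bbbk$. Let $K=T_2(-1)$ be the Sweedler Hopf algebra with $\mathcal{R}$-matrix $\mathcal{R}_\xi$, $\mathcal{B}=K\text{-}\mathbf{Mod}$, and $A_\gamma=\Bbbk[u]$ the algebra in $\mathcal{B}$ described in the context. Then the $\mathcal{B}$-center of $A_\gamma$ (for $\mathcal{C}=\Bbbk\text{-}\mathbf{Mod}(\mathcal{B})\cong\mathcal{B}$) equals its left center: $$Z_{\mathcal{B}}(A_\gamma)=C^l(A_\gamma)=\Bbbk[u^2],\qquad g\cdot u^2=u^2,\quad x\cdot u^2=0,$$ as a commutative algebra in $\mathcal{B}\cong\mathcal{Z}_{\mathcal{B}}(\mathcal{C})$, independently of $\xi$ and $\gamma$.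
   Context: $T_2(-1)=\Bbbk\langle g,x\rangle/(g^2-1,x^2,gx+xg)$ with $g$ group-like and $\Delta(x)=g\otimes x+x\otimes1$; it is quasi-triangular with $\mathcal{R}_\xi=\frac12(1\otimes1+1\otimes g+g\otimes1-g\otimes g)+\frac\xi2(x\otimes x+x\otimes gx+gx\otimes gx-gx\otimes x)$. $\mathcal{B}=K\text{-}\mathbf{Mod}$ with braiding $\Psi(v\otimes w)=(\mathcal{R}_\xi^{(2)}\cdot w)\otimes(\mathcal{R}_\xi^{(1)}\cdot v)$. $A_\gamma=\Bbbk[u]$ is the $K$-module algebra with $g\cdot u=-u$, $x\cdot u=\gamma$ (action extended to products by the module algebra rule). Taking $H=\Bbbk$, $\mathcal{C}=\Bbbk\text{-}\mathbf{Mod}(\mathcal{B})$ is identified with $\mathcal{B}$ and its relative center $\mathcal{Z}_{\mathcal{B}}(\mathcal{C})$ with $\mathcal{B}$ (half-braidings given by $\Psi$). The $\mathcal{B}$-center of an algebra $(A,m)$ is the terminal object among pairs $(Z,\zeta\colon Z\to A)$ with $m(\zeta\otimes\mathrm{Id})=m(\mathrm{Id}\otimes\zeta)\Psi_{Z,A}$; the left center $C^l(A)$ is the largest subobject $C\subseteq A$ with $m\Psi_{C,A}=m$ on $C\otimes A$. *)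

(* Defs.v *)
(* Concrete model of the Sweedler Hopf algebra K = T_2(-1)
   acting on A_gamma = k[u] (= {poly k}, u = 'X), and of the braiding Psi
   given by the R-matrix R_xi. *)
From HB Require Import structures.
From mathcomp Require Import all_boot all_order all_algebra.
Set Implicit Arguments. Unset Strict Implicit. Unset Printing Implicit Defensive.
Import Order.TTheory GRing.Theory Num.Theory.
Local Open Scope ring_scope.

Inductive Kb := K1 | Kg | Kx | Kgx.

Definition Kact (V : Type) (gV xV : V -> V) (h : Kb) : V -> V :=
  match h with K1 => id | Kg => gV | Kx => xV | Kgx => fun v => gV (xV v) end.

(* The R-matrix R_xi = sum of c * (h1 (x) h2), listed as (c, h1, h2):
   R_xi = 1/2 (1(x)1 + 1(x)g + g(x)1 - g(x)g)
        + xi/2 (x(x)x + x(x)gx + gx(x)gx - gx(x)x). *)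
Definition Rmat (k : fieldType) (xi : k) : seq (k * Kb * Kb) :=
  [:: (2^-1, K1, K1); (2^-1, K1, Kg); (2^-1, Kg, K1); (- 2^-1, Kg, Kg);
      (xi / 2, Kx, Kx); (xi / 2, Kx, Kgx); (xi / 2, Kgx, Kgx); (- (xi / 2), Kgx, Kx)].

(* Given K-modules V, W and a bilinear map b : W -> V -> T,
   mPsi ... b v w = b-composed-with-Psi_{V,W}(v (x) w)
                  = sum R^(2).w  `b`  R^(1).v. *)
Definition mPsi (k : fieldType) (xi : k) (V W : Type) (T : lmodType k)
  (gV xV : V -> V) (gW xW : W -> W) (b : W -> V -> T) (v : V) (w : W) : T :=
  \sum_(r <- Rmat xi) r.1.1 *: b (Kact gW xW r.2 w) (Kact gV xV r.1.2 v).

(* The K-module algebra structure on A_gamma = k[u]: g.u = -u, x.u = gamma,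
   extended to monomials by the module-algebra rule
   h.(u^n * u) = (h1.u^n)(h2.u^n) with Delta g = g(x)g, Delta x = g(x)x + x(x)1,
   h.1 = eps(h) 1, and then linearly. *)
Fixpoint gpow (k : fieldType) (n : nat) : {poly k} :=
  if n is n'.+1 then gpow k n' * (- 'X) else 1.
Fixpoint xpow (k : fieldType) (gamma : k) (n : nat) : {poly k} :=
  if n is n'.+1 then gpow k n' * gamma%:P + xpow gamma n' * 'X else 0.

Definition GA (k : fieldType) (p : {poly k}) : {poly k} :=
  \sum_(i < size p) p`_i *: gpow k i.
Definition XA (k : fieldType) (gamma : k) (p : {poly k}) : {poly k} :=
  \sum_(i < size p) p`_i *: xpow gamma i.

Definition is_Ksubmod (k : fieldType) (gamma : k) (C : {poly k} -> Prop) :=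
  [/\ C 0, (forall p q, C p -> C q -> C (p + q)),
      (forall (a : k) p, C p -> C (a *: p)),
      (forall p, C p -> C (GA p)) & (forall p, C p -> C (XA gamma p))].

Definition left_central (k : fieldType) (xi gamma : k) (C : {poly k} -> Prop) :=
  forall c a, C c ->
    mPsi xi (@GA k) (XA gamma) (@GA k) (XA gamma) (fun a' c' => a' * c') c a = c * a.

Definition is_left_center (k : fieldType) (xi gamma : k) (C : {poly k} -> Prop) :=
  [/\ is_Ksubmod gamma C, left_central xi gamma C &
      forall C', is_Ksubmod gamma C' -> left_central xi gamma C' ->
        forall p, C' p -> C p].

(* K-modules Z (objects of B ~ Z_B(C), half-braiding given by Psi). *)
Definition sweedler_module (k : fieldType) (Z : lmodType k) (gZ xZ : Z -> Z) :=
  [/\ forall z, gZ (gZ z) = z, forall z, xZ (xZ z) = 0 &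
      forall z, gZ (xZ z) = - xZ (gZ z)].

Definition admissible_pair (k : fieldType) (xi gamma : k) (Z : lmodType k)
  (gZ xZ : Z -> Z) (zeta : Z -> {poly k}) :=
  [/\ (forall (a : k) z1 z2, zeta (a *: z1 + z2) = a *: zeta z1 + zeta z2),
      (forall z, zeta (gZ z) = GA (zeta z)),
      (forall z, zeta (xZ z) = XA gamma (zeta z)) &
      (forall z a, zeta z * a =
         mPsi xi gZ xZ (@GA k) (XA gamma) (fun a' z' => a' * zeta z') z a)].

(* (C, inclusion) is the B-center Z_B(A_gamma): it is an admissible pair and
   it is terminal: every admissible pair (Z, zeta) factors uniquely through
   the inclusion via a K-linear map phi : Z -> C (represented as a map into
   A_gamma with values in C). *)
Definition is_B_center (k : fieldType) (xi gamma : k) (C : {poly k} -> Prop) :=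
  [/\ is_Ksubmod gamma C,
      (forall c a, C c -> c * a =
         mPsi xi (@GA k) (XA gamma) (@GA k) (XA gamma) (fun a' c' => a' * c') c a) &
      forall (Z : lmodType k) (gZ xZ : Z -> Z),
        (forall (a : k) z1 z2, gZ (a *: z1 + z2) = a *: gZ z1 + gZ z2) ->
        (forall (a : k) z1 z2, xZ (a *: z1 + z2) = a *: xZ z1 + xZ z2) ->
        sweedler_module gZ xZ ->
        forall zeta : Z -> {poly k}, admissible_pair xi gamma gZ xZ zeta ->
        let is_factor := fun phi : Z -> {poly k} =>
          [/\ (forall z, C (phi z)),
              (forall (a : k) z1 z2, phi (a *: z1 + z2) = a *: phi z1 + phi z2),
              (forall z, phi (gZ z) = GA (phi z)),
              (forall z, phi (xZ z) = XA gamma (phi z)) &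
              (forall z, phi z = zeta z)] in
        (exists phi, is_factor phi) /\
        (forall phi1 phi2, is_factor phi1 -> is_factor phi2 -> phi1 =1 phi2)].

Definition ku2 (k : fieldType) (p : {poly k}) : Prop :=
  exists q : {poly k}, p = q \Po 'X^2.

(* Main.v *)
Require Import Defs.
From HB Require Import structures.
From mathcomp Require Import all_boot all_order all_algebra.
From mathcomp Require Import ring zify.
Import GRing.Theory.
Set Implicit Arguments. Unset Strict Implicit.
Local Open Scope ring_scope.

Section Helpers.
Variable k : fieldType.

Lemma gpowE i : gpow k i = (- 'X) ^+ i.
Proof. by elim: i => [|i IH] //=; rewrite IH exprSr. Qed.

Lemma GAE (p : {poly k}) : GA p = p \Po (- 'X).
Proof. by rewrite /GA comp_polyE; apply: eq_bigr => i _; rewrite gpowE. Qed.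

Lemma GA0 : GA (0 : {poly k}) = 0.
Proof. by rewrite GAE comp_poly0. Qed.

Lemma GAC (c : k) : GA c%:P = c%:P.
Proof. by rewrite GAE comp_polyC. Qed.

Lemma GAX : GA ('X : {poly k}) = - 'X.
Proof. by rewrite GAE comp_polyX. Qed.

Lemma GA_X2 (q : {poly k}) : GA (q \Po 'X^2) = q \Po 'X^2.
Proof. by rewrite GAE -comp_polyA comp_Xn_poly sqrrN. Qed.

Lemma xpow_even (gamma : k) m : xpow gamma m.*2 = 0.
Proof.
elim: m => [|m IH] //; rewrite doubleS /= IH mul0r addr0 !gpowE; ring.
Qed.

Lemma size_xpow (gamma : k) i : (size (xpow gamma i) <= i)%N.
Proof.
elim: i => [|i IH] /=; first by rewrite size_poly0.
apply: leq_trans (size_polyD _ _) _; rewrite geq_max; apply/andP; split.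
  have h1 : (size (gpow k i) <= i.+1)%N.
    rewrite gpowE; apply: leq_trans (size_poly_exp_leq _ _) _.
    by rewrite size_polyN size_polyX /= mul1n.
  have h2 := size_polyC_leq1 gamma.
  apply: leq_trans (size_polyMleq _ _) _; lia.
have h3 := size_polyMleq (xpow gamma i) 'X.
rewrite size_polyX in h3; lia.
Qed.

Lemma size_XA (gamma : k) (p : {poly k}) : (size (XA gamma p) <= size p)%N.
Proof.
apply: leq_trans (size_sum _ _ _) _; apply/bigmax_leqP => i _.
apply: leq_trans (size_scale_leq _ _) _.
by apply: leq_trans (size_xpow _ _) _; apply: ltnW.
Qed.

Lemma ku2_XA (gamma : k) q : XA gamma (q \Po 'X^2) = 0.
Proof.
rewrite /XA big1 // => i _.
case oi: (odd i).
  by rewrite coef_comp_poly_Xn // dvdn2 oi scale0r.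
by rewrite -(odd_double_half i) oi add0n xpow_even scaler0.
Qed.


Lemma half2 : (2%:R : k) != 0 -> (2^-1 : k) + 2^-1 = 1.
Proof. by move=> h; field. Qed.

Lemma mPsiE (xi gamma : k) (c a : {poly k}) :
  mPsi xi (@GA k) (XA gamma) (@GA k) (XA gamma) (fun a' c' => a' * c') c a =
  2^-1 *: (a * c) + 2^-1 *: (GA a * c) + 2^-1 *: (a * GA c) + (- 2^-1) *: (GA a * GA c)
  + (xi / 2) *: (XA gamma a * XA gamma c) + (xi / 2) *: (GA (XA gamma a) * XA gamma c)
  + (xi / 2) *: (GA (XA gamma a) * GA (XA gamma c))
  + (- (xi / 2)) *: (XA gamma a * GA (XA gamma c)).
Proof. by rewrite /mPsi /Rmat !big_cons big_nil /= addr0 !addrA. Qed.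

Lemma XA_X (gamma : k) : XA gamma 'X = gamma%:P.
Proof.
rewrite /XA size_polyX !big_ord_recr big_ord0 /= !coefX /= add0r scale0r add0r.
by rewrite scale1r mul1r mul0r addr0.
Qed.

Definition od (p : {poly k}) := (odd_poly p \Po 'X^2) * 'X.

Lemma GA_od p : GA (od p) = - od p.
Proof. by rewrite /od GAE comp_polyM -GAE GA_X2 comp_polyX mulrN. Qed.

Lemma od_half (h2 : (2%:R : k) != 0) p : od p = 2^-1 *: (p - GA p).
Proof.
have E := poly_even_odd p; rewrite -/(od p) in E.
have GAp : GA p = even_poly p \Po 'X^2 - od p.
  by rewrite -{1}E GAE comp_polyD -!GAE GA_X2 GA_od.
rewrite GAp -{2}E.
have -> : even_poly p \Po 'X^2 + od p - (even_poly p \Po 'X^2 - od p) = od p *+ 2.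
  by rewrite opprB addrC addrA subrK mulr2n.
by rewrite -scaler_nat scalerA mulVf // scale1r.
Qed.

Lemma od0_ku2 p : od p = 0 -> ku2 p.
Proof. by move=> H; exists (even_poly p); rewrite -{1}(poly_even_odd p) -/(od p) H addr0. Qed.

Lemma LC_ku2 (h2 : (2%:R : k) != 0) (xi gamma : k) c a : ku2 c ->
  mPsi xi (@GA k) (XA gamma) (@GA k) (XA gamma) (fun a' c' => a' * c') c a = c * a.
Proof.
case=> q ->; rewrite mPsiE GA_X2 ku2_XA GA0 !mulr0 !scaler0 !addr0.
rewrite scaleNr addrAC addrK -scalerDl half2 // scale1r mulrC //.
Qed.

Lemma kill (h2 : (2%:R : k) != 0) (xi gamma : k) c : GA c = - c ->
  c * 'X = mPsi xi (@GA k) (XA gamma) (@GA k) (XA gamma) (fun a' c' => a' * c') c 'X ->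
  c = 0.
Proof.
move=> Gc H; apply/eqP; apply: contraT => cn0.
rewrite mPsiE Gc GAX XA_X GAC in H.
move: H => /(congr1 (fun p : {poly k} => p`_(size c))).
rewrite /= !coefD !coefZ !coefCM coefMX mulrN mulNr mulrNN !coefN coefXM.
have -> : (XA gamma c)`_(size c) = 0 by rewrite nth_default // size_XA.
rewrite size_poly_eq0 (negbTE cn0).
set l := c`_(size c).-1.
set Y := _`_(size c).
move=> Hn.
have E : l - (2^-1 * l + 2^-1 * - l + 2^-1 * - l + - 2^-1 * l + xi / 2 * (gamma * 0) +
   xi / 2 * (gamma * 0) + xi / 2 * (gamma * Y) + - (xi / 2) * (gamma * Y)) = 0 by rewrite {1}Hn subrr.
have E2 : l - (2^-1 * l + 2^-1 * - l + 2^-1 * - l + - 2^-1 * l + xi / 2 * (gamma * 0) +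
   xi / 2 * (gamma * 0) + xi / 2 * (gamma * Y) + - (xi / 2) * (gamma * Y)) = l * 2 by field.
rewrite E2 in E.
have : l != 0.
  have := lead_coef_eq0 c; rewrite /lead_coef -/l => ->; exact: cn0.
move=> ln0; move/eqP: E; rewrite mulf_eq0 (negbTE h2) orbF (negbTE ln0). done.
Qed.

Lemma mPsi_zeta (xi gamma : k) (Z : lmodType k) (gZ xZ : Z -> Z) (zt : Z -> {poly k})
  (hg : forall z, zt (gZ z) = GA (zt z)) (hx : forall z, zt (xZ z) = XA gamma (zt z)) z a :
  mPsi xi gZ xZ (@GA k) (XA gamma) (fun a' z' => a' * zt z') z a =
  mPsi xi (@GA k) (XA gamma) (@GA k) (XA gamma) (fun a' c' => a' * c') (zt z) a.
Proof.
rewrite /mPsi; apply: eq_bigr => [[[c h1] h2]] _ /=.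
by case: h1 => //=; rewrite ?hg ?hx.
Qed.

End Helpers.

Theorem proposition7p2 (k : fieldType) (xi gamma : k) (hchar : (2%:R : k) != 0) :
  [/\ is_B_center xi gamma (@ku2 k),
      is_left_center xi gamma (@ku2 k),
      (* k[u^2] is a (commutative) subalgebra of A_gamma *)
      (ku2 (1 : {poly k}) /\ forall p q : {poly k}, ku2 p -> ku2 q -> ku2 (p * q)),
      (* braided commutativity of k[u^2] *)
      (forall p q : {poly k}, ku2 p -> ku2 q ->
         mPsi xi (@GA k) (XA gamma) (@GA k) (XA gamma) (fun a c => a * c) p q = p * q) &
      (GA ('X^2 : {poly k}) = 'X^2 /\ XA gamma ('X^2 : {poly k}) = 0)].
Proof.
have ku2X2 : ku2 ('X^2 : {poly k}) by exists 'X; rewrite comp_polyX.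
have ku2_GA p : ku2 p -> GA p = p by case=> q ->; rewrite GA_X2.
have ku2_XA' p : ku2 p -> XA gamma p = 0 by case=> q ->; exact: ku2_XA.
have sub : is_Ksubmod gamma (@ku2 k).
  split.
  - by exists 0; rewrite comp_poly0.
  - by move=> p q [p' ->] [q' ->]; exists (p' + q'); rewrite comp_polyD.
  - by move=> a p [p' ->]; exists (a *: p'); rewrite comp_polyZ.
  - by move=> p hp; rewrite ku2_GA.
  - by move=> p hp; rewrite ku2_XA' //; exists 0; rewrite comp_poly0.
split.
- split => //.
  + by move=> c a hc; rewrite LC_ku2.
  + move=> Z gZ xZ lg lx sw zt [lz hg hx hm]; cbv zeta.
    have zt0 : zt 0 = 0.
      have := lz 1 0 0; rewrite !scale1r addr0 => /eqP.
      by rewrite -subr_eq0 opprD addrA subrr sub0r oppr_eq0 => /eqP.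
    have zZ a z : zt (a *: z) = a *: zt z by rewrite -[a *: z]addr0 lz zt0 addr0.
    have zD z1 z2 : zt (z1 + z2) = zt z1 + zt z2 by have := lz 1 z1 z2; rewrite !scale1r.
    have inC z : ku2 (zt z).
      apply: od0_ku2.
      have Ew : zt (2^-1 *: (z + (-1) *: gZ z)) = od (zt z).
        by rewrite od_half // zZ zD zZ hg scaleN1r.
      apply: (kill hchar (xi:=xi) (gamma:=gamma)); first exact: GA_od.
      by rewrite -Ew hm mPsi_zeta.
    split.
    * by exists zt; split.
    * by move=> phi1 phi2 [_ _ _ _ e1] [_ _ _ _ e2] z; rewrite e1 e2.
- split => //.
  + by move=> c a hc; rewrite LC_ku2.
  + move=> C' [C0 CD CZ CG CX] LC' p Cp.
    have Cod : C' (od p).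
      rewrite od_half //; apply: (CZ); apply: (CD) => //; rewrite -scaleN1r; apply: (CZ); exact: CG.
    apply: od0_ku2; apply: (kill hchar (xi:=xi) (gamma:=gamma)); first exact: GA_od.
    by rewrite LC'.
- split; first by exists 1; rewrite -polyC1 comp_polyC.
  by move=> p q [p' ->] [q' ->]; exists (p' * q'); rewrite comp_polyM.
- by move=> p q hp _; rewrite LC_ku2.
- by split; [exact: ku2_GA | exact: ku2_XA'].
Qed.
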